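(* Let $f$ be a positive definite function and let $W=\{w_1,\dots,w_N\}\subset V$ be a norming set for $\mathcal{B}_M$. Let $\mathrm{Q}_Wx=\sum_{k=1}^N\mu_kx(w_k)$ be a quadrature rule (with real weights $\mu_k$) that is exact on $\mathcal{N}_{K_f,W}$, i.e. $\frac1n\sum_{i=1}^n y(v_i)=\mathrm{Q}_Wy$ for all $y\in\mathcal{N}_{K_f,W}$. Then for every $x\in\mathcal{L}(G)$, $$\Big|\frac1n\sum_{i=1}^nx(v_i)-\mathrm{Q}_Wx\Big|\le\big(1+\|(\mathbf{S}_W\mathbf{B}_M)^{-1}\|\big)\Big(\sum_{k=M+1}^n\hat{f}_k\Big)^{1/2}\|x\|_{K_f}.$$
   Context: Let $G$ be a graph with vertex set $V=\{v_1,\dots,v_n\}$, symmetric non-negative weighted adjacency matrix $\mathbf{A}$, degree matrix $\mathbf{D}=\mathrm{diag}(\sum_k\mathbf{A}_{ik})$ (positive), and normalized Laplacian $\mathbf{L}=\mathbf{I}_n-\mathbf{D}^{-1/2}\mathbf{A}\mathbf{D}^{-1/2}$. Signals are vectors in $\mathcal{L}(G)\cong\mathbb{R}^n$ with euclidean norm and standard basis $e_1,\dots,e_n$. Fix an orthonormal eigendecomposition $\mathbf{L}=\mathbf{U}\,\mathrm{diag}(\lambda_1,\dots,\lambda_n)\mathbf{U}^\intercal$ with columns $u_1,\dots,u_n$. Fourier transform $\hat{x}=\mathbf{U}^\intercal x$; convolution operator $\mathbf{C}_x=\mathbf{U}\,\mathrm{diag}(\hat{x})\mathbf{U}^\intercal$.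 For $f\in\mathcal{L}(G)$ let $(\mathbf{K}_f)_{ij}=(\mathbf{C}_{e_j}f)(v_i)$; $f$ is a positive definite function if $\mathbf{K}_f$ is symmetric strictly positive definite; then $\|x\|_{K_f}=\sqrt{x^\intercal\mathbf{K}_f^{-1}x}$. For distinct nodes $w_k=v_{j_k}$, $\mathcal{N}_{K_f,W}=\mathrm{span}\{\mathbf{C}_{e_{j_1}}f,\dots,\mathbf{C}_{e_{j_N}}f\}$. Let $\mathcal{B}_M=\mathrm{span}\{u_1,\dots,u_M\}$, $\mathbf{S}_Wx(v)=x(v)$ for $v\in W$ and $0$ otherwise, $\mathbf{B}_Mx=\sum_{k=1}^M(u_k^\intercal x)u_k$. $W$ is a norming set for $\mathcal{B}_M$ if $\mathbf{S}_W\mathbf{B}_M$ is injective on $\mathcal{B}_M$; $\|(\mathbf{S}_W\mathbf{B}_M)^{-1}\|$ is the euclidean operator norm of the inverse of $\mathbf{S}_W\mathbf{B}_M|_{\mathcal{B}_M}$ on its image $\mathbf{S}_W(\mathcal{B}_M)$. *)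

(* Defs.v *)
From HB Require Import structures.
From mathcomp Require Import all_boot all_order all_algebra.
From mathcomp Require Import classical_sets reals.
Set Implicit Arguments. Unset Strict Implicit. Unset Printing Implicit Defensive.
Import Order.TTheory GRing.Theory Num.Theory.
Local Open Scope ring_scope.
Local Open Scope classical_set_scope.

(* Signals on a graph with n nodes v_0..v_{n-1} are column vectors 'cV[R]_n;
   x(v_i) is x i 0.  Indices are 0-based: u_k of the paper is col (k-1) U. *)

Section GraphSP.
Variables (R : realType) (n : nat).

Definition enorm (x : 'cV[R]_n) : R := Num.sqrt (\sum_i x i 0 ^+ 2).

Definition deg (A : 'M[R]_n) (i : 'I_n) : R := \sum_k A i k.

Definition normLap (A : 'M[R]_n) : 'M[R]_n :=
  let Dmh := diag_mx (\row_i (Num.sqrt (deg A i))^-1) in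
  1%:M - Dmh *m A *m Dmh.

Definition graph_weights (A : 'M[R]_n) : Prop :=
  A^T = A /\ (forall i j, 0 <= A i j) /\ (forall i, 0 < deg A i).

Definition ortho_eigen (L U : 'M[R]_n) (lam : 'rV[R]_n) : Prop :=
  U^T *m U = 1%:M /\ L = U *m diag_mx lam *m U^T.

Definition fourier (U : 'M[R]_n) (x : 'cV[R]_n) : 'cV[R]_n := U^T *m x.

Definition convop (U : 'M[R]_n) (x : 'cV[R]_n) : 'M[R]_n :=
  U *m diag_mx (fourier U x)^T *m U^T.

Definition ebase (j : 'I_n) : 'cV[R]_n := delta_mx j 0.

Definition Kmat (U : 'M[R]_n) (f : 'cV[R]_n) : 'M[R]_n :=
  \matrix_(i, j) (convop U (ebase j) *m f) i 0.

Definition pos_def_fun (U : 'M[R]_n) (f : 'cV[R]_n) : Prop :=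
  (Kmat U f)^T = Kmat U f /\
  forall x : 'cV[R]_n, x != 0 -> 0 < (x^T *m Kmat U f *m x) 0 0.

Definition Knorm (U : 'M[R]_n) (f x : 'cV[R]_n) : R :=
  Num.sqrt ((x^T *m invmx (Kmat U f) *m x) 0 0).

Definition inBM (U : 'M[R]_n) (M : nat) (y : 'cV[R]_n) : Prop :=
  exists c : 'I_n -> R, y = \sum_(k < n | (k < M)%N) c k *: col k U.

Definition projBM (U : 'M[R]_n) (M : nat) (x : 'cV[R]_n) : 'cV[R]_n :=
  \sum_(k < n | (k < M)%N) ((col k U)^T *m x) 0 0 *: col k U.

Definition sampleW (N : nat) (w : 'I_N -> 'I_n) (x : 'cV[R]_n) : 'cV[R]_n :=
  \col_i (if i \in [seq w k | k <- enum 'I_N] then x i 0 else 0).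

Definition norming_set (U : 'M[R]_n) (M N : nat) (w : 'I_N -> 'I_n) : Prop :=
  forall y1 y2, inBM U M y1 -> inBM U M y2 ->
    sampleW w (projBM U M y1) = sampleW w (projBM U M y2) -> y1 = y2.

Definition inv_opnorm (U : 'M[R]_n) (M N : nat) (w : 'I_N -> 'I_n) : R :=
  sup [set r | exists y, [/\ inBM U M y, y != 0 &
                 r = enorm y / enorm (sampleW w (projBM U M y))]].

Definition inNKW (U : 'M[R]_n) (f : 'cV[R]_n) (N : nat) (w : 'I_N -> 'I_n)
  (y : 'cV[R]_n) : Prop :=
  exists c : 'I_N -> R, y = \sum_k c k *: (convop U (ebase (w k)) *m f).

Definition quadW (N : nat) (w : 'I_N -> 'I_n) (mu : 'I_N -> R)
  (x : 'cV[R]_n) : R := \sum_k mu k * x (w k) 0.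

Definition meanv (x : 'cV[R]_n) : R := n%:R^-1 * \sum_i x i 0.

End GraphSP.

(* Main.v *)
Require Import Defs.
From HB Require Import structures.
From mathcomp Require Import all_boot all_order all_algebra.
From mathcomp Require Import boolp classical_sets reals.
From mathcomp.algebra_tactics Require Import ring lra.
Import Order.TTheory GRing.Theory Num.Theory.
Local Open Scope ring_scope.

Section Gen.
Variable R : realType.

Lemma cs_sum (I : finType) (a b : I -> R) :
  (\sum_i a i * b i) ^+ 2 <= (\sum_i a i ^+ 2) * (\sum_i b i ^+ 2).
Proof.
set A := \sum_i a i ^+ 2; set B := \sum_i b i ^+ 2; set C := \sum_i a i * b i.
have B0 : 0 <= B by apply: sumr_ge0 => i _; exact: sqr_ge0.
have E : \sum_i (a i * B - b i * C) ^+ 2 = B * (A * B - C ^+ 2).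
  transitivity (\sum_i (B ^+ 2 * a i ^+ 2 - (2 * B * C) * (a i * b i)
                 + C ^+ 2 * b i ^+ 2)).
    by apply: eq_bigr => i _; ring.
  rewrite big_split /= sumrB -!mulr_sumr -/A -/B -/C; ring.
have H : 0 <= B * (A * B - C ^+ 2).
  by rewrite -E; apply: sumr_ge0 => i _; exact: sqr_ge0.
have [Bz|Bp] := eqVneq B 0.
  have bz : forall i, b i = 0.
    move=> i; apply/eqP; rewrite -sqrf_eq0; apply/eqP.
    move/eqP: Bz; rewrite psumr_eq0 => [/allP Hb|i0 _]; last exact: sqr_ge0.
    by apply/eqP; apply: Hb; rewrite mem_index_enum.
  have A0 : 0 <= A by apply: sumr_ge0 => i _; exact: sqr_ge0.
  rewrite /C big1 ?expr0n ?mulr_ge0 //= => i _; by rewrite bz mulr0.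
have Bpos : 0 < B by rewrite lt_def Bp B0.
by rewrite (pmulr_rge0 _ Bpos) in H; rewrite -subr_ge0.
Qed.


Lemma dotE n (a b : 'cV[R]_n) : (a^T *m b) 0 0 = \sum_i a i 0 * b i 0.
Proof. by rewrite mxE; apply: eq_bigr => i _; rewrite mxE. Qed.

Lemma quad_diag n (a b : 'cV[R]_n) (d : 'rV[R]_n) :
  (a^T *m diag_mx d *m b) 0 0 = \sum_k a k 0 * d 0 k * b k 0.
Proof.
rewrite mul_mx_diag mxE; apply: eq_bigr => i _; by rewrite !mxE.
Qed.

Lemma diag_swap n (a b : 'cV[R]_n) : diag_mx a^T *m b = diag_mx b^T *m a.
Proof.
by apply/matrixP => i k; rewrite !mul_diag_mx !mxE [k]ord1 mulrC.
Qed.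

Lemma colentry m n (A : 'M[R]_(m, n)) i j : (A *m delta_mx j (0 : 'I_1)) i 0 = A i j.
Proof. by rewrite -colE mxE. Qed.

End Gen.

Section Spec.
Variables (R : realType) (n : nat) (U : 'M[R]_n).
Hypothesis hU : U^T *m U = 1%:M.

Lemma UUt : U *m U^T = 1%:M.
Proof. exact: mulmx1C. Qed.

Lemma dotU (a b : 'cV[R]_n) : (a^T *m b) = ((U^T *m a)^T *m (U^T *m b)).
Proof.
by rewrite trmx_mul trmxK -mulmxA (mulmxA U) UUt mul1mx.
Qed.

Lemma sqsum (v : 'cV[R]_n) : \sum_i v i 0 ^+ 2 = \sum_i (U^T *m v) i 0 ^+ 2.
Proof.
transitivity (\sum_i v i 0 * v i 0); first by apply: eq_bigr => i _; rewrite expr2.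
rewrite -dotE dotU dotE; apply: eq_bigr => i _; by rewrite expr2.
Qed.

Lemma Kspec (f : 'cV[R]_n) : Kmat U f = U *m diag_mx (fourier U f)^T *m U^T.
Proof.
apply/matrixP => i j; rewrite /Kmat mxE /convop /ebase /fourier.
rewrite -colentry; congr (_ i 0).
by rewrite -!mulmxA diag_swap.
Qed.


Lemma quadU (D : 'M[R]_n) (a b : 'cV[R]_n) :
  a^T *m (U *m D *m U^T) *m b = (U^T *m a)^T *m D *m (U^T *m b).
Proof. by rewrite trmx_mul trmxK !mulmxA. Qed.

Lemma fh_pos (f : 'cV[R]_n) : pos_def_fun U f -> forall k, 0 < fourier U f k 0.
Proof.
move=> [_ Hpd] k.
have hx : U^T *m (U *m delta_mx k (0 : 'I_1)) = delta_mx k 0 by rewrite mulmxA hU mul1mx.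
have xnz : U *m delta_mx k (0 : 'I_1) != 0.
  apply/negP => /eqP E; move: hx; rewrite E mulmx0 => /matrixP /(_ k 0).
  by rewrite !mxE !eqxx /= => /eqP; rewrite eq_sym oner_eq0.
have := Hpd _ xnz; rewrite Kspec quadU hx trmx_delta.
rewrite -rowE colentry !mxE eqxx mulr1n.
done.
Qed.

Lemma Kinv (f : 'cV[R]_n) : pos_def_fun U f ->
  invmx (Kmat U f) = U *m diag_mx (\row_k (fourier U f k 0)^-1) *m U^T.
Proof.
move=> Hpd; have fp := fh_pos f Hpd.
have E : Kmat U f *m (U *m diag_mx (\row_k (fourier U f k 0)^-1) *m U^T) = 1%:M.
  rewrite Kspec -!mulmxA (mulmxA U^T) hU mul1mx.
  rewrite (mulmxA (diag_mx _)) mulmx_diag.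
  have -> : \row_j ((fourier U f)^T 0 j * (\row_k (fourier U f k 0)^-1) 0 j)
            = const_mx 1 :> 'rV[R]_n.
    apply/matrixP => i j; have := fp j; rewrite !mxE => H; rewrite mulfV // lt0r_neq0 //.
  by rewrite diag_const_mx mul1mx UUt.
have [Ku _] := mulmx1_unit E.
by rewrite -[invmx _]mulmx1 -E !mulmxA mulVmx // mul1mx.
Qed.

End Spec.

Lemma col_mulmx (R : realType) m n p (A : 'M[R]_(m, n)) (B : 'M[R]_(n, p)) j :
  col j (A *m B) = A *m col j B.
Proof. by apply/matrixP => i k; rewrite !mxE; apply: eq_bigr => l _; rewrite !mxE. Qed.

Lemma normL (R : realType) n (L : 'M[R]_n) (v : 'cV[R]_n) :
  \sum_i (L *m v) i 0 ^+ 2 <= (\sum_i \sum_j L i j ^+ 2) * \sum_j v j 0 ^+ 2.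
Proof.
rewrite mulr_suml; apply: ler_sum => i _; rewrite mxE; exact: cs_sum.
Qed.

Section BM.
Variables (R : realType) (n : nat) (U : 'M[R]_n) (M N : nat) (w : 'I_N -> 'I_n).
Hypothesis hU : U^T *m U = 1%:M.

Definition Dm : 'M[R]_n := diag_mx (\row_k ((k < M)%N)%:R).
Definition PW : 'M[R]_n :=
  diag_mx (\row_i ((i \in [seq w k | k <- enum 'I_N]))%:R).

Lemma sumcolE (c : 'I_n -> R) :
  \sum_(k < n | (k < M)%N) c k *: col k U = U *m (Dm *m \col_k c k).
Proof.
apply/matrixP => i j; rewrite summxE mxE big_mkcond /=.
apply: eq_bigr => k _; rewrite mul_diag_mx !mxE.
by case: ifP => _; rewrite ?mul1r ?mul0r ?mulr0 // mulrC.
Qed.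

Lemma projE (x : 'cV[R]_n) : projBM U M x = U *m (Dm *m (U^T *m x)).
Proof.
rewrite /projBM sumcolE; congr (_ *m (_ *m _)).
by apply/matrixP => k j; rewrite [j]ord1 !mxE; apply: eq_bigr => l _; rewrite !mxE.
Qed.

Lemma DmDm : Dm *m Dm = Dm.
Proof.
rewrite /Dm mulmx_diag; congr diag_mx; apply/matrixP => i j; rewrite !mxE.
by case: (j < M)%N; rewrite ?mul1r ?mul0r.
Qed.

Lemma inBM_ex y : inBM U M y -> exists c : 'cV[R]_n, y = U *m (Dm *m c).
Proof. by case=> c ->; exists (\col_k c k); rewrite sumcolE. Qed.

Lemma inBM_Dm (c : 'cV[R]_n) : inBM U M (U *m (Dm *m c)).
Proof.
exists (fun k => c k 0); rewrite sumcolE; congr (_ *m (_ *m _)).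
by apply/matrixP => k j; rewrite [j]ord1 !mxE.
Qed.

Lemma proj_Dm (c : 'cV[R]_n) : projBM U M (U *m (Dm *m c)) = U *m (Dm *m c).
Proof. by rewrite projE (mulmxA U^T U) hU mul1mx (mulmxA Dm Dm) DmDm. Qed.

Lemma sampleE x : sampleW w x = PW *m x.
Proof.
apply/matrixP => i j; rewrite [j]ord1 mul_diag_mx !mxE.
by case: ifP; rewrite ?mul1r ?mul0r.
Qed.

Lemma kerincl : norming_set U M w ->
  forall c : 'cV[R]_n, PW *m U *m Dm *m c = 0 -> Dm *m c = 0.
Proof.
move=> Hn c Hc.
have H0 : inBM U M 0.
  by exists (fun => 0); rewrite big1 // => k _; rewrite scale0r.
have := Hn _ _ (inBM_Dm c) H0.
rewrite proj_Dm !sampleE -!mulmxA in Hc *; rewrite Hc.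
rewrite projE !mulmx0 => /(_ erefl) E.
by rewrite -[Dm *m c]mul1mx -hU -mulmxA E mulmx0.
Qed.

Lemma bounded' : norming_set U M w ->
  exists C, 0 <= C /\ forall y, inBM U M y ->
    enorm y <= C * enorm (sampleW w y).
Proof.
move=> Hn; set G := PW *m U *m Dm.
have sub : (Dm <= G)%MS.
  rewrite submxE; apply/eqP/matrixP => i j.
  have := kerincl Hn (col j (cokermx G)).
  rewrite -/G -col_mulmx mulmx_coker => H.
  have {}H : Dm *m col j (cokermx G) = 0.
    by apply: H; apply/matrixP => a b; rewrite !mxE.
  move/matrixP: H => /(_ i 0); rewrite -col_mulmx [col _ _ _ _]mxE => ->; by rewrite !mxE.
set L := Dm *m pinvmx G.
have HL : L *m G = Dm by rewrite /L (mulmxKpV sub).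
exists (Num.sqrt (\sum_i \sum_j L i j ^+ 2)); split; first exact: sqrtr_ge0.
move=> y /inBM_ex [c ->].
have E : U^T *m (U *m (Dm *m c)) = L *m sampleW w (U *m (Dm *m c)).
  rewrite mulmxA hU mul1mx sampleE.
  transitivity (L *m G *m (Dm *m c)); first by rewrite HL mulmxA DmDm.
  by rewrite /G -!mulmxA (mulmxA Dm Dm) DmDm.
rewrite /enorm (@sqsum _ _ U hU) E -sqrtrM; last by apply: sumr_ge0 => i _; apply: sumr_ge0 => j _; exact: sqr_ge0.
rewrite ler_sqrt; first exact: normL.
apply: mulr_ge0; first by apply: sumr_ge0 => i _; apply: sumr_ge0 => j _; exact: sqr_ge0.
by apply: sumr_ge0 => i _; exact: sqr_ge0.
Qed.

End BM.

Lemma tr_entry (R : realType) m n (A : 'M[R]_(m, n)) i j : A^T i j = A j i.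
Proof. by rewrite mxE. Qed.

Lemma err_eq (R : realType) n N (w : 'I_N -> 'I_n) (mu : 'I_N -> R) (x : 'cV[R]_n) :
  meanv x - quadW w mu x =
  \sum_i (n%:R^-1 - \sum_k mu k * (w k == i)%:R) * x i 0.
Proof.
rewrite /meanv /quadW mulr_sumr.
have -> : \sum_k mu k * x (w k) 0 = \sum_i (\sum_k mu k * (w k == i)%:R) * x i 0.
  under [RHS]eq_bigr do rewrite mulr_suml.
  rewrite exchange_big /=; apply: eq_bigr => k _.
  rewrite (bigD1 (w k)) //= eqxx mulr1 big1 ?addr0 // => i /negbTE.
  by rewrite eq_sym => ->; rewrite mulr0 mul0r.
by rewrite -sumrB; apply: eq_bigr => i _; rewrite mulrBl.
Qed.

Lemma single_le (R : realType) (I : finType) (F : I -> R) k :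
  (forall i, 0 <= F i) -> F k <= \sum_i F i.
Proof.
move=> H; rewrite (bigD1 k) //= lerDl; apply: sumr_ge0 => i _; exact: H.
Qed.

Lemma sumsq_ge0 (R : realType) n (v : 'cV[R]_n) : 0 <= \sum_i v i 0 ^+ 2.
Proof. by apply: sumr_ge0 => i _; exact: sqr_ge0. Qed.

Lemma enorm_eq0 (R : realType) n (v : 'cV[R]_n) : enorm v = 0 -> v = 0.
Proof.
move=> /eqP; rewrite /enorm sqrtr_eq0 => H.
have : \sum_i v i 0 ^+ 2 == 0 by rewrite eq_le H sumsq_ge0.
rewrite psumr_eq0 => [/allP Hv|i _]; last exact: sqr_ge0.
apply/matrixP => i j; rewrite [j]ord1 mxE.
by apply/eqP; rewrite -sqrf_eq0; apply: Hv; rewrite mem_index_enum.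
Qed.

Lemma enorm_ge0 (R : realType) n (v : 'cV[R]_n) : 0 <= enorm v.
Proof. exact: sqrtr_ge0. Qed.

Lemma enorm_sq (R : realType) n (v : 'cV[R]_n) : enorm v ^+ 2 = \sum_i v i 0 ^+ 2.
Proof. by rewrite /enorm sqr_sqrtr // sumsq_ge0. Qed.

Lemma diag_entry (R : realType) n (g : 'I_n -> R) (v : 'cV[R]_n) i :
  (diag_mx (\row_k g k) *m v) i 0 = g i * v i 0.
Proof. by rewrite mul_diag_mx !mxE. Qed.

Lemma sample_entry (R : realType) n N (w : 'I_N -> 'I_n) (v : 'cV[R]_n) i :
  (sampleW w v) i 0 = if i \in [seq w k | k <- enum 'I_N] then v i 0 else 0.
Proof. by rewrite mxE. Qed.

Lemma row_entry (R : realType) n (g : 'I_n -> R) k : (\row_k g k) 0 k = g k.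
Proof. by rewrite mxE. Qed.

Theorem corollary3 (R : realType) (n : nat) (A : 'M[R]_n) (U : 'M[R]_n)
  (lam : 'rV[R]_n) (f : 'cV[R]_n) (M N : nat) (w : 'I_N -> 'I_n)
  (mu : 'I_N -> R) :
  graph_weights A ->
  ortho_eigen (normLap A) U lam ->
  pos_def_fun U f ->
  (M <= n)%N ->
  injective w ->
  norming_set U M w ->
  (forall y, inNKW U f w y -> meanv y = quadW w mu y) ->
  forall x : 'cV[R]_n,
    `|meanv x - quadW w mu x| <=
      (1 + inv_opnorm U M w) *
      Num.sqrt (\sum_(k < n | (M <= k)%N) fourier U f k 0) * Knorm U f x.
Proof.
move=> _ [hU _] Hpd _ _ Hn Hex x.
have fp := @fh_pos _ _ _ hU _ Hpd.
have Ksym : (Kmat U f)^T = Kmat U f := Hpd.1.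
set eps : 'cV[R]_n := \col_i (n%:R^-1 - \sum_k mu k * (w k == i)%:R).
have eE : forall y, meanv y - quadW w mu y = \sum_i eps i 0 * y i 0.
  by move=> y; rewrite err_eq; apply: eq_bigr => i _; rewrite mxE.
set h := Kmat U f *m eps.
have hW : forall j, h (w j) 0 = 0.
  move=> j.
  have Hc : Kmat U f *m delta_mx (w j) (0 : 'I_1) = convop U (@ebase R n (w j)) *m f.
    by apply/matrixP => i b; rewrite [b]ord1 colentry /Kmat mxE.
  have HN : inNKW U f w (Kmat U f *m delta_mx (w j) (0 : 'I_1)).
    exists (fun k => (k == j)%:R); rewrite Hc (bigD1 j) //= eqxx scale1r.
    by rewrite big1 ?addr0 // => k /negbTE ->; rewrite scale0r.
  have := Hex _ HN.
  move=> /eqP; rewrite -subr_eq0 eE => /eqP <-.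
  rewrite /h mxE; apply: eq_bigr => l _.
  by rewrite colentry mulrC -[Kmat U f l (w j)]tr_entry Ksym.
have quad0 : quadW w mu h = 0 by rewrite /quadW big1 // => k _; rewrite hW mulr0.
set eh := U^T *m eps.
set q := \sum_k fourier U f k 0 * eh k 0 ^+ 2.
have q0 : 0 <= q.
  by apply: sumr_ge0 => k _; apply: mulr_ge0; [exact: ltW | exact: sqr_ge0].
have qE : meanv h = q.
  rewrite -[meanv h]subr0 -quad0 eE -dotE /h mulmxA Kspec quadU quad_diag -/eh.
  by apply: eq_bigr => k _; rewrite tr_entry expr2; ring.
have hhE : forall k, (U^T *m h) k 0 = fourier U f k 0 * eh k 0.
  move=> k; rewrite /h Kspec -!mulmxA (mulmxA U^T U) hU mul1mx mul_diag_mx mxE.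
  by rewrite tr_entry.
set S := \sum_(k < n | (M <= k)%N) fourier U f k 0.
have S0 : 0 <= S by apply: sumr_ge0 => k _; exact: ltW.
set Aa := \sum_(k < n | ~~ (M <= k)%N) (U^T *m h) k 0 ^+ 2.
set B := \sum_(k < n | (M <= k)%N) (U^T *m h) k 0 ^+ 2.
have hn : \sum_i h i 0 ^+ 2 = Aa + B.
  by rewrite (@sqsum _ _ U hU) (bigID (fun k : 'I_n => (M <= k)%N)) /= addrC.
have BSq : B <= S * q.
  rewrite /B /S mulr_suml; apply: ler_sum => k _; rewrite hhE.
  have H : fourier U f k 0 * eh k 0 ^+ 2 <= q.
    apply: (@single_le _ _ (fun k => fourier U f k 0 * eh k 0 ^+ 2)) => i.
    by apply: mulr_ge0; [exact: ltW | exact: sqr_ge0].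
  apply: le_trans (ler_wpM2l (ltW (fp k)) H); rewrite le_eqVlt; apply/orP; left.
  by apply/eqP; ring.
set s := inv_opnorm U M w.
set hh := U^T *m h.
set y := U *m (Dm R n M *m hh).
set z := U *m (diag_mx (\row_k ((M <= k)%N)%:R) *m hh).
have hyz : h = y + z.
  rewrite /y /z -mulmxDr.
  have -> : Dm R n M *m hh + diag_mx (\row_k ((M <= k)%N)%:R) *m hh = hh.
    apply/matrixP => k b; rewrite [b]ord1 mxE /Dm !diag_entry ltnNge.
    by case: (M <= k)%N; rewrite ?mul1r ?mul0r ?addr0 ?add0r.
  by rewrite /hh mulmxA UUt ?mul1mx.
have yA : \sum_i y i 0 ^+ 2 = Aa.
  rewrite (@sqsum _ _ U hU) /y (mulmxA U^T U) hU mul1mx /Aa [RHS]big_mkcond.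
  apply: eq_bigr => k _; rewrite /Dm diag_entry ltnNge.
  by case: (M <= k)%N; rewrite ?mul1r ?mul0r ?expr0n.
have zB : \sum_i z i 0 ^+ 2 = B.
  rewrite (@sqsum _ _ U hU) /z (mulmxA U^T U) hU mul1mx /B [RHS]big_mkcond.
  apply: eq_bigr => k _; rewrite diag_entry.
  by case: (M <= k)%N; rewrite ?mul1r ?mul0r ?expr0n.
have sW : \sum_i (sampleW w y) i 0 ^+ 2 = \sum_i (sampleW w z) i 0 ^+ 2.
  apply: eq_bigr => i _; rewrite !sample_entry; case: ifP => // /mapP [k _ ->].
  have := hW k; rewrite hyz mxE => /eqP; rewrite addr_eq0 => /eqP ->.
  by rewrite sqrrN.
have sz : \sum_i (sampleW w z) i 0 ^+ 2 <= B.
  rewrite -zB; apply: ler_sum => i _; rewrite sample_entry.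
  by case: ifP => _; rewrite ?lexx // expr0n /= sqr_ge0.
have ratio0 : forall a b : R, 0 <= a -> 0 <= b -> 0 <= a / b.
  by move=> a b a0 b0; apply: divr_ge0.
have s0 : 0 <= s.
  rewrite /s /inv_opnorm.
  case: (pselect (has_sup [set r | exists y0, [/\ inBM U M y0, y0 != 0 &
                 r = enorm y0 / enorm (sampleW w (projBM U M y0))]])) => [hsE|nhs].
    case: (hsE) => [[r Er] _]; apply: le_trans (sup_upper_bound hsE Er).
    by case: Er => y0 [_ _ ->]; apply: ratio0; exact: enorm_ge0.
  by rewrite sup_out.
have ys : enorm y <= s * enorm (sampleW w y).
  have [->|ynz] := eqVneq y 0.
    rewrite {1}/enorm big1 ?sqrtr0; last by move=> i _; rewrite mxE expr0n.
    by apply: mulr_ge0 => //; exact: enorm_ge0.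
  have [C [C0 HC]] := @bounded' _ _ U M N w hU Hn.
  have H0 : inBM U M 0.
    by exists (fun => 0); rewrite big1 // => k _; rewrite scale0r.
  have P0 : projBM U M 0 = 0.
    by rewrite /projBM big1 // => k _; rewrite mulmx0 mxE scale0r.
  have Sy : enorm (sampleW w y) != 0.
    apply/negP => /eqP /enorm_eq0 Hs; move/negP: ynz; apply; apply/eqP.
    apply: (Hn _ _ (@inBM_Dm _ _ U M _) H0).
    by rewrite P0 proj_Dm // Hs sampleE mulmx0.
  have hs : has_sup [set r | exists y0, [/\ inBM U M y0, y0 != 0 &
                 r = enorm y0 / enorm (sampleW w (projBM U M y0))]].
    split; first by exists (enorm y / enorm (sampleW w y)), y; split;
      [exact: inBM_Dm | done | rewrite proj_Dm].
    exists C => r [y0 [Hy0 _ ->]].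
    have [c Ec] := @inBM_ex _ _ U M y0 Hy0.
    rewrite Ec proj_Dm // -Ec.
    have [E0|Enz] := eqVneq (enorm (sampleW w y0)) 0.
      by rewrite E0 invr0 mulr0.
    rewrite ler_pdivrMr; first exact: HC.
    by rewrite lt_def Enz enorm_ge0.
  have Hr : enorm y / enorm (sampleW w y) <= s.
    apply: (sup_upper_bound hs); exists y; split; [exact: inBM_Dm | done |].
    by rewrite proj_Dm.
  rewrite -(divfK Sy (enorm y)); apply: ler_wpM2r => //; exact: enorm_ge0.
have AsB : Aa <= s ^+ 2 * B.
  rewrite -yA -enorm_sq.
  have e1 := @enorm_ge0 _ _ y; have e2 := @enorm_ge0 _ _ (sampleW w y).
  have : enorm (sampleW w y) ^+ 2 <= B by rewrite enorm_sq sW.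
  move: ys; nra.
have hq : q ^+ 2 <= \sum_i h i 0 ^+ 2.
  rewrite -qE /meanv exprMn.
  have cs := @cs_sum _ _ (fun i : 'I_n => 1) (fun i => h i 0).
  have E1 : \sum_i (1 : R) * h i 0 = \sum_i h i 0 by apply: eq_bigr => i _; rewrite mul1r.
  have E2 : \sum_(i : 'I_n) (1 : R) ^+ 2 = n%:R.
    by rewrite (eq_bigr (fun _ => 1)) => [|i _]; rewrite ?expr1n // sumr_const card_ord.
  rewrite E1 E2 /= in cs.
  have hn1 : n%:R^-1 ^+ 2 * n%:R <= 1 :> R.
    have [->|n0] := eqVneq n 0%N; first by rewrite invr0 expr0n mul0r ler01.
    rewrite expr2 -mulrA mulVf ?mulr1 ?pnatr_eq0 // invf_le1 ?ltr0n ?lt0n //.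
    by rewrite ler1n lt0n.
  have T0 := @sumsq_ge0 _ _ h.
  have a0 : 0 <= n%:R^-1 ^+ 2 :> R by exact: sqr_ge0.
  move: cs hn1 T0 a0; set a := n%:R^-1 ^+ 2; set X := (\sum_i h i 0) ^+ 2;
    set T := \sum_i h i 0 ^+ 2 => cs hn1 T0 a0.
  nra.
have qbound : q <= (1 + s) ^+ 2 * S.
  have H1 : q * q <= ((s ^+ 2 + 1) * S) * q.
    have s2 : 0 <= s ^+ 2 by exact: sqr_ge0.
    have : s ^+ 2 * B <= s ^+ 2 * (S * q) by exact: ler_wpM2l.
    move: hq; rewrite hn expr2; move: AsB BSq; nra.
  have H2 : (s ^+ 2 + 1) * S <= (1 + s) ^+ 2 * S.
    by apply: ler_wpM2r => //; nra.
  apply: le_trans H2.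
  have [->|qnz] := eqVneq q 0; first by apply: mulr_ge0 => //; nra.
  by rewrite -(ler_pM2r (_ : 0 < q)) // lt_def qnz q0.
set xh := U^T *m x.
have eX : meanv x - quadW w mu x = \sum_k eh k 0 * xh k 0.
  by rewrite eE -dotE (@dotU _ _ U hU) dotE.
set kx := \sum_k xh k 0 * (fourier U f k 0)^-1 * xh k 0.
have kx0 : 0 <= kx.
  apply: sumr_ge0 => k _; rewrite mulrC mulrA -expr2; apply: mulr_ge0.
    exact: sqr_ge0.
  by rewrite invr_ge0; exact: ltW.
have KnE : Knorm U f x = Num.sqrt kx.
  rewrite /Knorm (@Kinv _ _ U hU f Hpd) quadU quad_diag.
  by congr Num.sqrt; apply: eq_bigr => k _; rewrite row_entry.
have csx : (\sum_k eh k 0 * xh k 0) ^+ 2 <= q * kx.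
  have := @cs_sum _ _ (fun k => Num.sqrt (fourier U f k 0) * eh k 0)
                      (fun k => xh k 0 / Num.sqrt (fourier U f k 0)).
  have sq : forall k, 0 < Num.sqrt (fourier U f k 0).
    by move=> k; rewrite sqrtr_gt0.
  have sq2 : forall k, Num.sqrt (fourier U f k 0) ^+ 2 = fourier U f k 0.
    by move=> k; rewrite sqr_sqrtr // ltW.
  have -> : \sum_i Num.sqrt (fourier U f i 0) * eh i 0 *
                  (xh i 0 / Num.sqrt (fourier U f i 0)) = \sum_k eh k 0 * xh k 0.
    apply: eq_bigr => k _; have := lt0r_neq0 (sq k) => nz.
    by rewrite mulrC -!mulrA [X in _ * X]mulrA mulVf // mul1r mulrC.
  have -> : \sum_i (Num.sqrt (fourier U f i 0) * eh i 0) ^+ 2 = q.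
    by apply: eq_bigr => k _; rewrite exprMn sq2.
  have -> : \sum_i (xh i 0 / Num.sqrt (fourier U f i 0)) ^+ 2 = kx.
    apply: eq_bigr => k _; rewrite exprMn exprVn sq2.
    by rewrite expr2 mulrAC.
  done.
rewrite eX KnE -sqrtr_sqr.
apply: le_trans (_ : Num.sqrt ((1 + s) ^+ 2 * S * kx) <= _).
  rewrite ler_sqrt; last by apply: mulr_ge0 => //; apply: mulr_ge0 => //; exact: sqr_ge0.
  by apply: le_trans csx _; exact: ler_wpM2r.
rewrite sqrtrM; last by apply: mulr_ge0 => //; exact: sqr_ge0.
rewrite sqrtrM; last exact: sqr_ge0.
by rewrite sqrtr_sqr ger0_norm //; apply: addr_ge0.
Qed.
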